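(* Let $\mathbb{K}$ be a field, $S=\mathbb{K}[x_1,\dots,x_n]$ standard graded, and $\Delta$ a $1$-dimensional simplicial complex on $[n]$ with $\{i\}\in\Delta$ for all $i\in[n]$, labelled so that $\operatorname{link}_\Delta 1=\{2,\dots,r\}$ (as a set of vertices). Let $\tau$ be a monomial order with $x_1>x_i$ for all $i>1$ and $x_2>x_3>\dots>x_r$. Let $I\subset S$ be a homogeneous ideal with $\operatorname{in}_\tau(I)=I_\Delta$, and let $\{f_F : F \text{ a minimal non-face of }\Delta\}$ be a reduced homogeneous Gröbner basis of $I$ with $\operatorname{in}_\tau(f_F)=\mathbf{x}_F$; write $d_F=\deg f_F$. Then for every $a$ with $1<a\le\min\{r,3\}$ and every minimal non-face $F$ with $1\notin F$, the monomial $x_1^{d_F-1}x_a$ does not belong to the support of $f_F$.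
   Context: For $F\subseteq[n]$, $\mathbf{x}_F=\prod_{i\in F}x_i$. $I_\Delta=(\mathbf{x}_F: F\notin\Delta)$. A minimal non-face is a subset $F\subseteq[n]$ with $F\notin\Delta$ but all proper subsets in $\Delta$; since $\Delta$ is $1$-dimensional with all vertices, $d_F\in\{2,3\}$. $\operatorname{link}_\Delta 1=\{G: G\cup\{1\}\in\Delta, 1\notin G\}$. A reduced Gröbner basis has monic elements and no monomial in the support of $f_F$ other than $\mathbf{x}_F$ lies in $\operatorname{in}_\tau(I)$. The support $\operatorname{supp} f$ is the set of monomials with nonzero coefficient in $f$. *)

(* Defs.v *)
From HB Require Import structures.
From mathcomp Require Import all_boot all_order all_algebra.
Set Implicit Arguments. Unset Strict Implicit. Unset Printing Implicit Defensive.
Import GRing.Theory.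
Local Open Scope ring_scope.

(** Polynomial ring K[x_0,...,x_{n-1}] as iterated univariate polynomials.
    The outermost polynomial variable is x_0. *)
Fixpoint mpoly (K : fieldType) (n : nat) : comNzRingType :=
  match n with
  | 0 => K
  | m.+1 => ({poly mpoly K m} : comNzRingType)
  end.

Definition mon (n : nat) := n.-tuple nat.

(** Coefficient of the monomial with exponent sequence s (head = exponent of
    the outermost variable x_0). *)
Fixpoint mcoef_seq (K : fieldType) (n : nat) : mpoly K n -> seq nat -> K :=
  match n return mpoly K n -> seq nat -> K with
  | 0 => fun p _ => p
  | m.+1 => fun (p : {poly mpoly K m}) s => mcoef_seq (p`_(head 0%N s)) (behead s)
  end.

Definition mcoef (K : fieldType) (n : nat) (p : mpoly K n) (m : mon n) : K :=
  mcoef_seq p (tval m).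

Definition in_supp (K : fieldType) (n : nat) (p : mpoly K n) (m : mon n) : Prop :=
  mcoef p m != 0.

Definition madd (n : nat) (a b : mon n) : mon n := [tuple (tnth a i + tnth b i)%N | i < n].
Definition mzero (n : nat) : mon n := [tuple 0%N | i < n].
Definition mdvd (n : nat) (a b : mon n) : bool := [forall i, tnth a i <= tnth b i]%N.
Definition mtdeg (n : nat) (a : mon n) : nat := (\sum_(i < n) tnth a i)%N.
Definition mvar (n : nat) (i : 'I_n) : mon n := [tuple (i == j : nat) | j < n].
Definition mset (n : nat) (F : {set 'I_n}) : mon n := [tuple (j \in F : nat) | j < n].

Definition monomial_order (n : nat) (lt : rel (mon n)) : Prop :=
  [/\ irreflexive lt,
      transitive lt,
      (forall a b, a != b -> lt a b || lt b a),
      (forall a b c, lt a b -> lt (madd a c) (madd b c))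
    & well_founded (fun a b => lt a b)].

Definition is_ideal (K : fieldType) (n : nat) (I : mpoly K n -> Prop) : Prop :=
  [/\ I 0,
      (forall f g, I f -> I g -> I (f + g))
    & (forall r f, I f -> I (r * f))].

Definition homogeneous (K : fieldType) (n : nat) (d : nat) (f : mpoly K n) : Prop :=
  forall m : mon n, in_supp f m -> mtdeg m = d.

Definition homogeneous_ideal (K : fieldType) (n : nat) (I : mpoly K n -> Prop) : Prop :=
  is_ideal I /\
  exists G : mpoly K n -> Prop,
    (forall g, G g -> I g /\ exists d, homogeneous d g) /\
    (forall J : mpoly K n -> Prop, is_ideal J -> (forall g, G g -> J g) ->
        forall f, I f -> J f).

Definition lead_mon (K : fieldType) (n : nat) (lt : rel (mon n)) (f : mpoly K n) (m : mon n)
  : Prop :=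
  in_supp f m /\ forall m', in_supp f m' -> m' = m \/ lt m' m.

Definition mono_ideal (K : fieldType) (n : nat) (G : mon n -> Prop) (p : mpoly K n) : Prop :=
  forall m, in_supp p m -> exists2 g, G g & mdvd g m.

Fixpoint mmono_seq (K : fieldType) (n : nat) : seq nat -> mpoly K n :=
  match n return seq nat -> mpoly K n with
  | 0 => fun _ => 1
  | m.+1 => fun s => ((mmono_seq K m (behead s))%:P * 'X^(head 0%N s) : {poly mpoly K m})
  end.
Definition mmono (K : fieldType) (n : nat) (m : mon n) : mpoly K n := mmono_seq K n (tval m).

Definition init_ideal (K : fieldType) (n : nat) (lt : rel (mon n)) (I : mpoly K n -> Prop)
  : mpoly K n -> Prop :=
  mono_ideal (fun m => exists2 f, I f /\ f != 0 & lead_mon lt f m).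

(** Simplicial complexes on the vertex set 'I_n (vertex i stands for i+1). *)
Definition simplicial_complex (n : nat) (D : {set {set 'I_n}}) : Prop :=
  set0 \in D /\ forall F G : {set 'I_n}, F \in D -> G \subset F -> G \in D.

Definition all_vertices (n : nat) (D : {set {set 'I_n}}) : Prop :=
  forall i : 'I_n, [set i] \in D.

Definition one_dimensional (n : nat) (D : {set {set 'I_n}}) : Prop :=
  (forall F : {set 'I_n}, F \in D -> #|F| <= 2)%N /\ exists2 F, F \in D & #|F| = 2%N.

Definition min_nonface (n : nat) (D : {set {set 'I_n}}) (F : {set 'I_n}) : Prop :=
  F \notin D /\ forall G : {set 'I_n}, G \proper F -> G \in D.

Definition link (n : nat) (D : {set {set 'I_n}}) (v : 'I_n) : {set {set 'I_n}} :=
  [set G in D | (v |: G \in D) && (v \notin G)].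

Definition SR_ideal (K : fieldType) (n : nat) (D : {set {set 'I_n}}) : mpoly K n -> Prop :=
  mono_ideal (fun m => exists2 F, F \notin D & m = mset F).

(* Main.v *)
Require Import Defs.
From HB Require Import structures.
From mathcomp Require Import all_boot all_order all_algebra.
Import GRing.Theory.
Local Open Scope ring_scope.
From mathcomp Require Import zify.
Set Implicit Arguments. Unset Strict Implicit. Unset Printing Implicit Defensive.

Module Aux.

Section Poly.
Variable K : fieldType.

Fixpoint mcf (n : nat) : mpoly K n -> (nat -> nat) -> K :=
  match n return mpoly K n -> (nat -> nat) -> K with
  | 0 => fun p _ => p
  | m.+1 => fun (p : {poly mpoly K m}) e => mcf (p`_(e 0%N)) (fun i => e i.+1)
  end.

Fixpoint mmf (n : nat) : (nat -> nat) -> mpoly K n :=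
  match n return (nat -> nat) -> mpoly K n with
  | 0 => fun _ => 1
  | m.+1 => fun e => ((mmf m (fun i => e i.+1))%:P * 'X^(e 0%N) : {poly mpoly K m})
  end.

Fixpoint cst (n : nat) (c : K) : mpoly K n :=
  match n return mpoly K n with
  | 0 => c
  | m.+1 => ((cst m c)%:P : {poly mpoly K m})
  end.

Lemma mcf_ext n (p : mpoly K n) e e' : (forall i, (i < n)%N -> e i = e' i) -> mcf p e = mcf p e'.
Proof.
elim: n p e e' => [|n IH] p e e' H //=.
rewrite (H 0%N) //. apply: IH => i Hi. by apply: H.
Qed.

Lemma mmf_ext n e e' : (forall i, e i = e' i) -> mmf n e = mmf n e'.
Proof.
elim: n e e' => [|n IH] e e' H //=. rewrite H (IH _ (fun i => e' i.+1)) //.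
Qed.

Lemma mcoef_seqE n (p : mpoly K n) s : mcoef_seq p s = mcf p (nth 0%N s).
Proof.
elim: n p s => [|n IH] p s //=.
rewrite IH. case: s => [|x s] /=; apply: mcf_ext => i _ //=; by rewrite !nth_nil.
Qed.

Lemma mmono_seqE n s : mmono_seq K n s = mmf n (nth 0%N s).
Proof.
elim: n s => [|n IH] s //=. rewrite IH. case: s => [|x s] //=.
rewrite (_ : mmf n (nth 0%N [::]) = mmf n (fun i => nth 0%N [::] i.+1)) //.
by apply: mmf_ext => i; rewrite !nth_nil.
Qed.



Lemma mcfD n (p q : mpoly K n) e : mcf (p + q) e = mcf p e + mcf q e.
Proof. elim: n p q e => [|n IH] p q e //=. by rewrite coefD IH. Qed.

Lemma mcfN n (p : mpoly K n) e : mcf (- p) e = - mcf p e.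
Proof. elim: n p e => [|n IH] p e //=. by rewrite coefN IH. Qed.

Lemma mcfB n (p q : mpoly K n) e : mcf (p - q) e = mcf p e - mcf q e.
Proof. by rewrite mcfD mcfN. Qed.

Lemma mcf0 n e : mcf (0 : mpoly K n) e = 0.
Proof. elim: n e => [|n IH] e //=. by rewrite coef0 IH. Qed.

Lemma mcfC n c (p : mpoly K n) e : mcf (cst n c * p) e = c * mcf p e.
Proof. elim: n p e => [|n IH] p e //=. by rewrite coefCM IH. Qed.

Definition dvdb n (t e : nat -> nat) := all (fun i => t i <= e i)%N (iota 0 n).

Lemma mcfM n t (p : mpoly K n) e :
  mcf (mmf n t * p) e = if dvdb n t e then mcf p (fun i => e i - t i)%N else 0.
Proof.
elim: n t p e => [|n IH] t p e /=. by rewrite mul1r.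
rewrite -mulrA coefCM coefXnM /dvdb /=.
case: ltnP => H.
  by rewrite mulr0 mcf0.
rewrite IH /dvdb /=.
have -> : all (fun i : nat => t i <= e i)%N (iota 1 n) = all (fun i : nat => t i.+1 <= e i.+1)%N (iota 0 n).
  by rewrite -(addn0 1%N) iotaDl all_map.
case: ifP => // _.
Qed.

Lemma mcf1 n e : mcf (1 : mpoly K n) e = if all (fun i => e i == 0)%N (iota 0 n) then 1 else 0.
Proof.
elim: n e => [|n IH] e //=.
rewrite coef1. case: eqP => He /=.
  rewrite IH -(addn0 1%N) iotaDl all_map /=; done.
by rewrite mulr0n mcf0.
Qed.

End Poly.

Section Mon.
Variable K : fieldType.
Variable n : nat.

Definition msub (a b : mon n) : mon n := [tuple (tnth a i - tnth b i)%N | i < n].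

Lemma nth_tnth (m : mon n) (i : 'I_n) : nth 0%N m i = tnth m i.
Proof. by rewrite (tnth_nth 0%N). Qed.

Lemma mcoefE (p : mpoly K n) m : mcoef p m = mcf p (nth 0%N m).
Proof. by rewrite /mcoef mcoef_seqE. Qed.

Lemma mdvdP (a b : mon n) : reflect (forall i, tnth a i <= tnth b i)%N (mdvd a b).
Proof. exact: forallP. Qed.

Lemma dvdb_mdvd (a b : mon n) : dvdb n (nth 0%N a) (nth 0%N b) = mdvd a b.
Proof.
apply/allP/mdvdP => H.
  move=> i; rewrite -!nth_tnth. apply: H. by rewrite mem_iota /= add0n.
move=> i; rewrite mem_iota add0n /= => Hi.
by have := H (Ordinal Hi); rewrite -!nth_tnth.
Qed.

Lemma mcoef_mul (w : mon n) (p : mpoly K n) m :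
  mcoef (mmono K w * p) m = if mdvd w m then mcoef p (msub m w) else 0.
Proof.
rewrite !mcoefE /mmono mmono_seqE mcfM dvdb_mdvd.
case: ifP => // _. apply: mcf_ext => i Hi.
have -> : i = Ordinal Hi by [].
by rewrite !nth_tnth tnth_mktuple.
Qed.

Lemma mcoefD (p q : mpoly K n) m : mcoef (p + q) m = mcoef p m + mcoef q m.
Proof. by rewrite !mcoefE mcfD. Qed.
Lemma mcoefB (p q : mpoly K n) m : mcoef (p - q) m = mcoef p m - mcoef q m.
Proof. by rewrite !mcoefE mcfB. Qed.
Lemma mcoefC c (p : mpoly K n) m : mcoef (cst n c * p) m = c * mcoef p m.
Proof. by rewrite !mcoefE mcfC. Qed.
Lemma mcoef0 m : mcoef (0 : mpoly K n) m = 0.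
Proof. by rewrite !mcoefE mcf0. Qed.

Lemma mcoef_mmono (w m : mon n) : mcoef (mmono K w) m = if m == w then 1 else 0.
Proof.
have H : mdvd w m && (all (fun i => nth 0%N (msub m w) i == 0%N) (iota 0 n)) = (m == w).
  apply/idP/eqP.
    move=> /andP [/mdvdP H1 /allP H2]. apply: eq_from_tnth => i.
    have := H2 i; rewrite mem_iota add0n ltn_ord => /(_ isT) /eqP.
    rewrite nth_tnth tnth_mktuple. move: (H1 i) => h1 /eqP; rewrite subn_eq0 => h2; apply/eqP; by rewrite eqn_leq h1 h2.
  move=> ->. apply/andP; split; first by apply/mdvdP.
  apply/allP => i; rewrite mem_iota add0n => Hi.
  have -> : i = Ordinal Hi by [].
  by rewrite nth_tnth tnth_mktuple subnn.
rewrite -[mmono K w]mulr1 mcoef_mul mcoefE mcf1 -H.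
by case: (mdvd w m).
Qed.

Lemma in_supp_mmono (w m : mon n) : in_supp (mmono K w) m <-> m = w.
Proof.
rewrite /in_supp mcoef_mmono. case: (eqVneq m w) => [->|ne]; rewrite ?eqxx; split => //.
- by move=> _; exact: oner_neq0.
- by move=> E; move: ne; rewrite E eqxx.
Qed.

Lemma msub_add (a b : mon n) : mdvd a b -> madd a (msub b a) = b.
Proof.
move/mdvdP => H. apply: eq_from_tnth => i. rewrite !tnth_mktuple.
move: (H i); lia.
Qed.

Lemma add_msub (a b : mon n) : msub (madd a b) a = b.
Proof.
apply: eq_from_tnth => i. rewrite !tnth_mktuple. lia.
Qed.

Lemma mdvd_add (a b : mon n) : mdvd a (madd a b).
Proof. apply/mdvdP => i. rewrite tnth_mktuple. lia. Qed.

End Mon.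

Section Supp.
Variable K : fieldType.

Fixpoint msupp (n : nat) : mpoly K n -> seq (seq nat) :=
  match n return mpoly K n -> seq (seq nat) with
  | 0 => fun _ => [:: [::]]
  | m.+1 => fun (p : {poly mpoly K m}) =>
      flatten [seq [seq i :: s | s <- msupp (p`_i)] | i <- iota 0 (size p)]
  end.

Lemma msuppP n (p : mpoly K n) e : mcf p e != 0 ->
  exists2 s, s \in msupp p & forall i, (i < n)%N -> nth 0%N s i = e i.
Proof.
elim: n p e => [|n IH] p e /=.
  by move=> _; exists [::].
move=> H. have [s Hs Hse] := IH _ _ H.
exists (e 0%N :: s).
  apply/flattenP. exists [seq e 0%N :: s0 | s0 <- msupp p`_(e 0%N)].
    apply/mapP. exists (e 0%N) => //. rewrite mem_iota add0n /=.
    rewrite ltnNge. apply/negP => Hle. move: H. by rewrite nth_default // mcf0 eqxx.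
  by apply: map_f.
by case=> [|i] //= Hi; rewrite Hse.
Qed.

Definition cand n (p : mpoly K n) : seq (mon n) :=
  [seq [tuple nth 0%N s (nat_of_ord i) | i < n] | s <- msupp p].

Lemma candP n (p : mpoly K n) m : in_supp p m -> m \in cand p.
Proof.
rewrite /in_supp mcoefE => /msuppP [s Hs Hse].
apply/mapP. exists s => //. apply: eq_from_tnth => i.
by rewrite tnth_mktuple Hse // nth_tnth.
Qed.

End Supp.

Section LM.
Variable K : fieldType.
Variable n : nat.
Variable lt : rel (mon n).
Hypothesis hirr : irreflexive lt.
Hypothesis htr : transitive lt.
Hypothesis htot : forall a b, a != b -> lt a b || lt b a.

Lemma max_in_list (P : pred (mon n)) (L : seq (mon n)) :
  has P L ->
  exists u, [/\ P u, u \in L & forall m, P m -> m \in L -> m = u \/ lt m u].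
Proof.
elim: L => [|x L IH] //= /orP [Px | HL].
  case HL: (has P L).
    have [u [Pu uL Hu]] := IH HL.
    case: (eqVneq x u) => [Exu|Hxu].
      exists x; split => //; first by rewrite inE eqxx.
      move=> m Pm; rewrite inE => /orP [/eqP -> | mL]; first by left.
      rewrite Exu; exact: Hu.
    case/orP: (htot Hxu) => Hlt.
      exists u; split => //; first by rewrite inE uL orbT.
      move=> m Pm; rewrite inE => /orP [/eqP -> | mL]; first by right.
      exact: Hu.
    exists x; split => //; first by rewrite inE eqxx.
    move=> m Pm; rewrite inE => /orP [/eqP -> | mL]; first by left.
    case: (Hu m Pm mL) => [->|H]; right => //. exact: htr H Hlt.
  exists x; split => //; first by rewrite inE eqxx.
  move=> m Pm; rewrite inE => /orP [/eqP -> | mL]; first by left.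
  by move/negbT/hasPn: HL => /(_ m mL); rewrite Pm.
have [u [Pu uL Hu]] := IH HL.
case: (boolP (P x)) => Px.
  case: (eqVneq x u) => [Exu|Hxu].
    exists x; split => //; first by rewrite inE eqxx.
    move=> m Pm; rewrite inE => /orP [/eqP -> | mL]; first by left.
    rewrite Exu; exact: Hu.
  case/orP: (htot Hxu) => Hlt.
    exists u; split => //; first by rewrite inE uL orbT.
    move=> m Pm; rewrite inE => /orP [/eqP -> | mL]; first by right.
    exact: Hu.
  exists x; split => //; first by rewrite inE eqxx.
  move=> m Pm; rewrite inE => /orP [/eqP -> | mL]; first by left.
  case: (Hu m Pm mL) => [->|H]; right => //. exact: htr H Hlt.
exists u; split => //; first by rewrite inE uL orbT.
move=> m Pm; rewrite inE => /orP [/eqP Em | mL]; last exact: Hu.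
by move: Px; rewrite -Em Pm.
Qed.

Lemma lead_exists (p : mpoly K n) m : in_supp p m -> exists u, lead_mon lt p u.
Proof.
move=> Hm.
have [u [Pu uL Hu]] := @max_in_list (fun m => mcoef p m != 0) (cand p)
  (introT hasP (ex_intro2 _ _ m (candP Hm) Hm)).
exists u; split => // m' Hm'. exact: Hu Hm' (candP Hm').
Qed.

End LM.

Ltac meq := apply: eq_from_tnth => ?; rewrite ?tnth_mktuple.

Section Ord.
Variable n : nat.
Variable lt : rel (mon n).
Hypothesis hmo : monomial_order lt.

Definition le (x y : mon n) := x = y \/ lt x y.

Lemma maddC (x y : mon n) : madd x y = madd y x.
Proof. meq. lia. Qed.
Lemma maddA (x y z : mon n) : madd x (madd y z) = madd (madd x y) z.
Proof. meq. lia. Qed.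

Lemma lt_irr x : ~ lt x x.
Proof. case: hmo => H _ _ _ _. by rewrite H. Qed.
Lemma lt_trans x y z : lt x y -> lt y z -> lt x z.
Proof. case: hmo => _ H _ _ _ h1 h2. exact: H h1 h2. Qed.
Lemma lt_asym x y : lt x y -> lt y x -> False.
Proof. move=> h1 h2. exact: (lt_irr (lt_trans h1 h2)). Qed.
Lemma lt_addr x y z : lt x y -> lt (madd x z) (madd y z).
Proof. case: hmo => _ _ _ H _. exact: H. Qed.
Lemma lt_addl x y z : lt x y -> lt (madd z x) (madd z y).
Proof. rewrite (maddC z x) (maddC z y). exact: lt_addr. Qed.
Lemma lt_total x y : x <> y -> lt x y \/ lt y x.
Proof. case: hmo => _ _ H _ _ ne. have /H/orP[] : x != y by apply/eqP. by left. by right. Qed.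
Lemma lt_cancel x y z : lt (madd x z) (madd y z) -> lt x y.
Proof.
move=> H. case: (eqVneq x y) => [E|ne]; first by rewrite E in H; case: (lt_irr H).
have ne2 : x <> y by apply/eqP.
case: (lt_total ne2) => // H2. case: (lt_asym H (lt_addr z H2)).
Qed.
Lemma le_refl x : le x x. Proof. by left. Qed.
Lemma le_lt_trans x y z : le x y -> lt y z -> lt x z.
Proof. case=> [->//|h1 h2]. exact: lt_trans h1 h2. Qed.
Lemma lt_le_trans x y z : lt x y -> le y z -> lt x z.
Proof. move=> h1 [<-//|h2]. exact: lt_trans h1 h2. Qed.
Lemma le_trans x y z : le x y -> le y z -> le x z.
Proof. case=> [->//|h1] h2. right. exact: lt_le_trans h1 h2. Qed.
Lemma le_addr x y z : le x y -> le (madd x z) (madd y z).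
Proof. case=> [->|h]; [left|right] => //. exact: lt_addr. Qed.
Lemma le_addl x y z : le x y -> le (madd z x) (madd z y).
Proof. rewrite (maddC z x) (maddC z y). exact: le_addr. Qed.
Lemma lt_le_add x y z w : lt x y -> le z w -> lt (madd x z) (madd y w).
Proof. move=> h1 h2. apply: (lt_le_trans (lt_addr z h1)). exact: le_addl. Qed.
Lemma le_lt_add x y z w : le x y -> lt z w -> lt (madd x z) (madd y w).
Proof. move=> h1 h2. apply: (le_lt_trans (le_addr z h1)). exact: lt_addl. Qed.
Lemma le_add x y z w : le x y -> le z w -> le (madd x z) (madd y w).
Proof. move=> h1 h2. apply: (le_trans (le_addr z h1)). exact: le_addl. Qed.
Lemma lt_neq x y : lt x y -> x <> y.
Proof. move=> h E; rewrite E in h. exact: lt_irr h. Qed.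

Lemma mtdegD (x y : mon n) : mtdeg (madd x y) = (mtdeg x + mtdeg y)%N.
Proof. rewrite /mtdeg -big_split /=. apply: eq_bigr => i _. by rewrite tnth_mktuple. Qed.

Lemma mtdeg_mset (G : {set 'I_n}) : mtdeg (mset G) = #|G|.
Proof.
rewrite /mtdeg -sum1_card [RHS]big_mkcond /=. apply: eq_bigr => i _. by rewrite tnth_mktuple; case: (i \in G).
Qed.

Lemma mtdeg_mvar (j : 'I_n) : mtdeg (mvar j) = 1%N.
Proof.
rewrite /mtdeg (bigD1 j) //= big1 ?tnth_mktuple ?eqxx //.
move=> i /negbTE; rewrite tnth_mktuple eq_sym => -> //.
Qed.

Lemma mtdeg_msub (x y : mon n) : mdvd y x -> mtdeg (msub x y) = (mtdeg x - mtdeg y)%N.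
Proof.
move=> H. by rewrite -{2}(msub_add H) mtdegD addKn.
Qed.

Lemma mtdeg_pos (w : mon n) : (0 < mtdeg w)%N -> exists j, (0 < tnth w j)%N.
Proof.
move=> H. case: (boolP [exists j, 0 < tnth w j]%N) => [/existsP [j Hj] | Hn]; first by exists j.
move: H. rewrite /mtdeg big1 // => i _. move: Hn; rewrite negb_exists => /forallP /(_ i). lia.
Qed.

Lemma mtdeg0 (w : mon n) : mtdeg w = 0%N -> forall i, tnth w i = 0%N.
Proof.
move=> /eqP; rewrite /mtdeg sum_nat_eq0 => /forallP H i. by apply/eqP; apply: H.
Qed.

End Ord.

Section Main.
Variables (K : fieldType) (n : nat) (n0 : (0 < n)%N) (D : {set {set 'I_n}}) (r : nat)
  (lt : rel (mon n)) (I : mpoly K n -> Prop) (f : {set 'I_n} -> mpoly K n)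
  (dF : {set 'I_n} -> nat).
Let v : 'I_n := Ordinal n0.
Hypotheses (hSC : simplicial_complex D) (hav : all_vertices D)
  (hlink : forall w : 'I_n, [set w] \in link D v <-> (1 <= w < r)%N)
  (hmo : monomial_order lt)
  (hx1 : forall i : 'I_n, i != v -> lt (mvar i) (mvar v))
  (hch : forall i j : 'I_n, (1 <= i)%N -> (i < j)%N -> (j < r)%N -> lt (mvar j) (mvar i))
  (hId : is_ideal I)
  (hGB : forall F, min_nonface D F ->
     [/\ I (f F), homogeneous (dF F) (f F), lead_mon lt (f F) (mset F),
         mcoef (f F) (mset F) = 1
       & forall m, in_supp (f F) m -> m != mset F -> ~ init_ideal lt I (mmono K m)])
  (hinit2 : forall p, init_ideal lt I p <->
     mono_ideal (fun m => exists2 F, min_nonface D F & m = mset F) p).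
Variable a : 'I_n.
Hypothesis ha : (1 < a.+1 <= minn r 3)%N.

Lemma a_ge1 : (1 <= a)%N. Proof. move: ha; lia. Qed.
Lemma a_le2 : (a <= 2)%N. Proof. move: ha; lia. Qed.
Lemma a_ltr : (a < r)%N. Proof. move: ha; lia. Qed.
Lemma a_neq_v : a != v. Proof. apply/eqP => E. have := a_ge1. by rewrite E. Qed.

Lemma small_in_D (G : {set 'I_n}) : (#|G| <= 1)%N -> G \in D.
Proof.
case: hSC => h0 _. rewrite leq_eqVlt ltnS leqn0 => /orP [/cards1P [x ->] | /eqP /cards0_eq ->] //.
Qed.

Lemma mnf_card G : min_nonface D G -> (2 <= #|G|)%N.
Proof. case=> HG _. rewrite ltnNge. apply/negP => /small_in_D. by rewrite (negbTE HG). Qed.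

Lemma pair_mnf (x y : 'I_n) : x != y -> [set x; y] \notin D -> min_nonface D [set x; y].
Proof.
move=> nxy HD. split => // G /proper_card. rewrite cards2 nxy ltnS. exact: small_in_D.
Qed.

Lemma mnf_sub G (H : {set 'I_n}) : min_nonface D G -> H \proper G -> H \in D.
Proof. by case=> _ h; apply: h. Qed.

Lemma card_le_n (G : {set 'I_n}) : (#|G| <= n)%N.
Proof. by rewrite -[X in (_ <= X)%N]card_ord max_card. Qed.

Definition std (m : mon n) := forall G, min_nonface D G -> ~~ mdvd (mset G) m.

Lemma tail_std G t : min_nonface D G -> in_supp (f G) t -> t <> mset G -> std t.
Proof.
move=> hG ht ne G' hG'. apply/negP => Hd.
case: (hGB hG) => _ _ _ _ /(_ t ht). have -> : t != mset G by apply/eqP.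
move=> /(_ isT); apply. apply/hinit2 => m /in_supp_mmono ->. by exists (mset G') => //; exists G'.
Qed.

Lemma coef_nz (p : mpoly K n) m : in_supp p m -> p != 0.
Proof. move=> H; apply/negP => /eqP E. by move: H; rewrite /in_supp E mcoef0 eqxx. Qed.

Lemma nonstd_LM p u : I p -> lead_mon lt p u -> exists2 G, min_nonface D G & mdvd (mset G) u.
Proof.
move=> hp [hu hmax].
have : init_ideal lt I (mmono K u).
  move=> m /in_supp_mmono ->. exists u; last by apply/mdvdP.
  by exists p => //; split => //; exact: coef_nz hu.
move/hinit2 => /(_ u). case/(_ (iffRL (in_supp_mmono K u u) erefl)) => g [G hG ->] hd.
by exists G.
Qed.

Lemma f_deg G t : min_nonface D G -> in_supp (f G) t -> mtdeg t = #|G|.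
Proof.
move=> hG ht. case: (hGB hG) => _ hh [hl _] _ _.
by rewrite (hh t ht) -(hh _ hl) mtdeg_mset.
Qed.

Lemma dF_card G : min_nonface D G -> dF G = #|G|.
Proof.
move=> hG. case: (hGB hG) => _ hh [hl _] _ _. by rewrite -(hh _ hl) mtdeg_mset.
Qed.

Lemma f_lead G t : min_nonface D G -> in_supp (f G) t -> le lt t (mset G).
Proof. move=> hG ht. case: (hGB hG) => _ _ [_ hl] _ _. exact: hl. Qed.

Lemma f_one G : min_nonface D G -> mcoef (f G) (mset G) = 1.
Proof. move=> hG. by case: (hGB hG). Qed.

Lemma f_I G : min_nonface D G -> I (f G).
Proof. move=> hG. by case: (hGB hG). Qed.

Definition pv (k : nat) : mon n := [tuple ((j == v) * k)%N | j < n].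

Lemma mvar_pv : mvar v = pv 1.
Proof. meq. rewrite eq_sym. lia. Qed.

Lemma pvD k l : madd (pv k) (pv l) = pv (k + l).
Proof. meq. lia. Qed.

Lemma mtdeg_pv k : mtdeg (pv k) = k.
Proof.
rewrite /mtdeg (bigD1 v) //= big1 ?addn0; first by rewrite tnth_mktuple eqxx mul1n.
move=> i /negbTE; rewrite tnth_mktuple => -> //.
Qed.

Lemma mset_D1 (G : {set 'I_n}) x : x \in G -> mset G = madd (mvar x) (mset (G :\ x)).
Proof.
move=> hx. meq. rewrite in_setD1. case: (eqVneq x _) => [<-|ne] /=; first by rewrite hx.
by [].
Qed.

Lemma L0 k (w : mon n) : tnth w v = 0%N -> mtdeg w = k.+1 -> lt w (pv k.+1).
Proof.
elim: k w => [|k IH] w hv hd.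
  have [j hj] := mtdeg_pos (ltac:(rewrite hd; done) : (0 < mtdeg w)%N).
  have hjv : j != v by apply/eqP => E; move: hj; rewrite E hv.
  have hdv : mdvd (mvar j) w by apply/mdvdP => i; rewrite tnth_mktuple; case: eqP => // <-.
  rewrite -(msub_add hdv).
  have h0 : forall i, tnth (msub w (mvar j)) i = 0%N.
    apply: mtdeg0. by rewrite mtdeg_msub // hd mtdeg_mvar.
  have -> : msub w (mvar j) = pv 0 by apply: eq_from_tnth => i; rewrite h0 tnth_mktuple; lia.
  have -> : madd (mvar j) (pv 0) = mvar j by meq; lia.
  rewrite -mvar_pv. exact: hx1.
have [j hj] := mtdeg_pos (ltac:(rewrite hd; done) : (0 < mtdeg w)%N).
have hjv : j != v by apply/eqP => E; move: hj; rewrite E hv.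
have hdv : mdvd (mvar j) w by apply/mdvdP => i; rewrite tnth_mktuple; case: eqP => // <-.
rewrite -(msub_add hdv) -addn1 -pvD -mvar_pv maddC.
apply: (lt_le_add hmo).
  apply: IH; first by rewrite tnth_mktuple hv.
  by rewrite mtdeg_msub // hd mtdeg_mvar subn1.
right. exact: hx1.
Qed.

Lemma L0' k (w : mon n) : tnth w v = 0%N -> mtdeg w = k -> le lt w (pv k).
Proof.
case: k => [|k] hv hd; last by right; apply: L0.
left. meq. rewrite (mtdeg0 hd). lia.
Qed.

Lemma LG (G : {set 'I_n}) : (2 <= #|G|)%N -> lt (mset G) (pv #|G|).
Proof.
move=> h2. case: (boolP (v \in G)) => hv.
  rewrite (mset_D1 hv) mvar_pv (cardsD1 v G) hv -pvD.
  apply: lt_addl => //. move: h2; rewrite (cardsD1 v G) hv add1n ltnS => h1.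
  case E: #|G :\ v| h1 => [|k] //= _. apply: L0.
    by rewrite tnth_mktuple !inE eqxx.
  by rewrite mtdeg_mset E.
move: h2; case E: #|G| => [|k] // _. apply: L0; last by rewrite mtdeg_mset E.
by rewrite tnth_mktuple (negbTE hv).
Qed.

Definition Tk (k : nat) : mon n := madd (pv k.-1) (mvar a).

Lemma L1 (H : {set 'I_n}) c : v \notin H -> c \in H -> le lt (mvar c) (mvar a) -> (2 <= #|H|)%N ->
  lt (mset H) (Tk #|H|).
Proof.
move=> hv hc hca h2. rewrite (mset_D1 hc) /Tk maddC.
apply: (lt_le_add hmo) => //.
move: h2; rewrite (cardsD1 c H) hc add1n ltnS => h1 /=.
case E: #|H :\ c| h1 => [|k] //= _. apply: L0.
  by rewrite tnth_mktuple !inE (negbTE hv) andbF.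
by rewrite mtdeg_mset E.
Qed.

Lemma find_c (H : {set 'I_n}) : (forall x, x \in H -> (1 <= x < r)%N) -> (2 <= #|H|)%N ->
  exists2 c, c \in H & le lt (mvar c) (mvar a).
Proof.
move=> hH /card_gt1P [x [y [hx hy nxy]]].
have hxr := hH x hx; have hyr := hH y hy.
have : (a <= x)%N || (a <= y)%N.
  have := a_le2. have := a_ge1. move: nxy. rewrite -val_eqE /=. lia.
case/orP => h.
  exists x => //. case: (ltngtP a x) h => // h' _.
    right. apply: hch => //; [exact: a_ge1|lia].
  left. by rewrite (val_inj h').
exists y => //. case: (ltngtP a y) h => // h' _.
  right. apply: hch => //; [exact: a_ge1|lia].
left. by rewrite (val_inj h').
Qed.

Lemma deg_shape (m : mon n) k : mtdeg m = k.+1 -> (k <= tnth m v)%N ->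
  exists j, m = madd (pv k) (mvar j).
Proof.
move=> hd hk.
have hdv : mdvd (pv k) m by apply/mdvdP => i; rewrite tnth_mktuple; case: eqP => [->|_] //; lia.
have hw : mtdeg (msub m (pv k)) = 1%N by rewrite mtdeg_msub // hd mtdeg_pv; lia.
have [j hj] := mtdeg_pos (ltac:(rewrite hw; done) : (0 < mtdeg (msub m (pv k)))%N).
have hdj : mdvd (mvar j) (msub m (pv k)) by apply/mdvdP => i; rewrite tnth_mktuple; case: eqP => // <-.
have h0 : forall i, tnth (msub (msub m (pv k)) (mvar j)) i = 0%N.
  apply: mtdeg0. by rewrite mtdeg_msub // hw mtdeg_mvar.
exists j. rewrite -(msub_add hdv) -(msub_add hdj).
have -> : msub (msub m (pv k)) (mvar j) = pv 0 by apply: eq_from_tnth => i; rewrite h0 tnth_mktuple; lia.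
meq. lia.
Qed.

Lemma shape G t k j : min_nonface D G -> in_supp (f G) t -> t <> mset G ->
  mdvd t (madd (pv k) (mvar j)) ->
  [/\ j != v, [set v; j] \in D & t = madd (pv (#|G|).-1) (mvar j)].
Proof.
move=> hG ht ne /mdvdP hdv.
have hd := f_deg hG ht. have h2 := mnf_card hG.
have hlt : lt t (mset G) by case: (f_lead hG ht).
have hz : forall i, i != v -> i != j -> tnth t i = 0%N.
  move=> i hiv hij. move: (hdv i). rewrite !tnth_mktuple (negbTE hiv) eq_sym (negbTE hij). lia.
case: (boolP ((j != v) && (0 < tnth t j)%N)) => [/andP [hjv hj] | hn].
  have hj1 : (tnth t j <= 1)%N by move: (hdv j); rewrite !tnth_mktuple (negbTE hjv) eqxx; lia.
  have Et : t = madd (pv (tnth t v)) (mvar j).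
    apply: eq_from_tnth => i; rewrite ?tnth_mktuple. case: (eqVneq i v) => [->|hiv]; first by rewrite ?(negbTE hjv) ?eq_sym ?(negbTE hjv); lia.
    case: (eqVneq j i) => [<-|hij]; first by rewrite ?(negbTE hjv); lia.
    rewrite hz // eq_sym //.
  have htv : tnth t v = (#|G|).-1.
    move: hd. rewrite {1}Et mtdegD mtdeg_pv mtdeg_mvar. lia.
  split => //; last by rewrite {1}Et htv.
  apply/negPn/negP => hD.
  have hvj : v != j by rewrite eq_sym.
  move: (tail_std hG ht ne (pair_mnf hvj hD)) => /negP; apply.
  apply/mdvdP => i. rewrite tnth_mktuple in_set2.
  case: (eqVneq i v) => [->|hiv] /=; first by rewrite htv; lia.
  case: (eqVneq i j) => [->|hij] //=.
have Et : t = pv #|G|.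
  have hz' : forall i, i != v -> tnth t i = 0%N.
    move=> i hiv. case: (eqVneq i j) => [E|hij]; last exact: hz.
    move: hn. rewrite -E hiv /=. lia.
  have htv : tnth t v = #|G|.
    rewrite -hd /mtdeg (bigD1 v) //= big1 ?addn0 //.
  apply: eq_from_tnth => i; rewrite ?tnth_mktuple. case: (eqVneq _ v) => [->|hiv]; first by rewrite htv; lia.
  by rewrite hz'.
by case: (lt_asym hmo hlt); rewrite Et; apply: LG.
Qed.

Lemma std_of_tail (m t : mon n) G d : mtdeg m = d.+1 -> (d <= tnth m v)%N -> mdvd t m ->
  min_nonface D G -> in_supp (f G) t -> t <> mset G -> std m.
Proof.
move=> hd hdv htm hG ht ne.
have [j Em] := deg_shape hd hdv.
have htm' : mdvd t (madd (pv d) (mvar j)) by rewrite -Em.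
have [hjv hD _] := shape hG ht ne htm'.
move=> G' hG'. apply/negP => /mdvdP hd'.
have hsub : G' \subset [set v; j].
  apply/subsetP => x hx. move: (hd' x). rewrite Em !tnth_mktuple hx in_set2 => H.
  case: (eqVneq x v) => [-> //|hxv]. case: (eqVneq j x) => [E | hjx] //.
  exfalso. move: H. rewrite ?(negbTE hxv) ?(negbTE hjx) /=. lia.
have : G' == [set v; j].
  rewrite eqEcard hsub cards2 eq_sym hjv /=. exact: mnf_card hG'.
move/eqP => E. case: hG' => hn _. by move: hn; rewrite E hD.
Qed.

Definition key (G : {set 'I_n}) : mon n := madd (mset G) (pv (n - #|G|)).
Definition Tgt (G : {set 'I_n}) : mon n := [tuple ((j == v) * (dF G).-1 + (j == a))%N | j < n].
Definition PF (F : {set 'I_n}) := min_nonface D F -> v \notin F -> ~ in_supp (f F) (Tgt F).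

Lemma neqC (i j : 'I_n) : i != j -> (j == i) = false.
Proof. by rewrite eq_sym => /negbTE. Qed.

Lemma Tgt_eq G : min_nonface D G -> Tgt G = Tk #|G|.
Proof. move=> hG. meq. by rewrite (dF_card hG) [a == _]eq_sym. Qed.

Lemma hwf : well_founded (fun x y => lt x y).
Proof. by case: hmo. Qed.

Section Step.
Variables (F : {set 'I_n}) (b : 'I_n).
Hypotheses (hF : min_nonface D F) (hvF : v \notin F) (haF : a \notin F) (hbF : b \in F)
  (hbv : b != v) (hG0 : min_nonface D [set v; b])
  (IH : forall G, lt (key G) (key F) -> PF G).
Let d := #|F|.
Let B := madd (mvar v) (mset F).
Let T' := madd (mvar v) (Tk d).

Lemma d2 : (2 <= d)%N. Proof. exact: mnf_card hF. Qed.

Lemma T'_eq : T' = madd (pv d) (mvar a).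
Proof. have := d2. rewrite /T' /Tk mvar_pv maddA pvD. move=> h. congr madd. congr pv. lia. Qed.

Lemma T'v : tnth T' v = d.
Proof. rewrite T'_eq !tnth_mktuple eqxx (negbTE a_neq_v). lia. Qed.

Definition Class (p : mpoly K n) :=
  [/\ I p, in_supp p T', (forall m, in_supp p m -> lt m B),
      (forall m, in_supp p m -> mtdeg m = d.+1)
    & (forall m, in_supp p m -> (d <= tnth m v)%N -> std m)].

Lemma I_sub p q : I p -> I q -> I (p - q).
Proof.
case: hId => _ hadd hmul hp hq. apply: hadd => //. rewrite -mulN1r. exact: hmul.
Qed.
Lemma I_mul q p : I p -> I (q * p).
Proof. case: hId => _ _ hmul. exact: hmul. Qed.

Lemma inner u p : lead_mon lt p u -> Class p -> False.
Proof.
elim/(well_founded_ind hwf): u p => u IHu p hLM [hIp hT' hB hdeg hstd].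
have [G hG hGu] := nonstd_LM hIp hLM.
have huv : (tnth u v < d)%N.
  rewrite ltnNge; apply/negP => h. by have := hstd u hLM.1 h G hG; rewrite hGu.
set w := msub u (mset G). set c := mcoef p u.
set p' := p - cst n c * (mmono K w * f G).
have hcoef : forall m, mcoef p' m = mcoef p m - c * (if mdvd w m then mcoef (f G) (msub m w) else 0).
  by move=> m; rewrite mcoefB mcoefC mcoef_mul.
have huw : madd w (mset G) = u by rewrite maddC msub_add.
have hwu : mdvd w u by rewrite -huw; apply: mdvd_add.
have hmsubu : msub u w = mset G by rewrite -{1}huw add_msub.
have hu0 : mcoef p' u = 0 by rewrite hcoef hwu hmsubu f_one // mulr1 subrr.
have hsupp : forall m, in_supp p' m -> in_supp p m \/ (mdvd w m /\ in_supp (f G) (msub m w)).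
  move=> m; rewrite /in_supp hcoef. case: (eqVneq (mcoef p m) 0) => [E|hne]; last by left.
  rewrite E sub0r oppr_eq0 mulf_eq0 negb_or => /andP [_]. case: (mdvd w m) => //; last by rewrite eqxx.
  by right.
have hmw : forall m, mdvd w m -> madd w (msub m w) = m by move=> m; apply: msub_add.
have hlt : forall m, in_supp p' m -> lt m u.
  move=> m hm. have hmu : m <> u by move=> E; move: hm; rewrite /in_supp E hu0 eqxx.
  case: (hsupp m hm) => [hpm | [hdw hfm]].
    by case: (hLM.2 m hpm).
  case: (f_lead hG hfm) => [E|hlt'].
    by exfalso; apply: hmu; rewrite -(hmw m hdw) E huw.
  rewrite -(hmw m hdw) -huw. exact: lt_addl.
have hT'p' : in_supp p' T'.
  rewrite /in_supp hcoef. case: ifP => hdw; last by rewrite mulr0 subr0.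
  case: (eqVneq (mcoef (f G) (msub T' w)) 0) => [->|hfT]; first by rewrite mulr0 subr0.
  exfalso. set t := msub T' w. have hft : in_supp (f G) t by [].
  have EuT : madd u t = madd T' (mset G).
    by rewrite -{1}huw -{1}(hmw T' hdw) -/t -!maddA (maddC (mset G)).
  case: (eqVneq t (mset G)) => [Et|ne].
    have : T' = u by rewrite -(hmw T' hdw) -/t Et huw.
    by move=> E; move: huv; rewrite -E T'v ltnn.
  have ne' : t <> mset G by apply/eqP.
  have htT' : mdvd t (madd (pv d) (mvar a)).
    rewrite -T'_eq. apply/mdvdP => i. by rewrite /t tnth_mktuple leq_subr.
  have [_ _ Et] := shape hG hft ne' htT'.
  have hGn := card_le_n G. have hG2 := mnf_card hG.
  have hltG : lt t (mset G) by case: (f_lead hG hft).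
  case: (boolP (v \in G)) => hvG.
    case: (eqVneq #|G| 2) => [h2|h3].
      have := congr1 (fun m => tnth m v) EuT. rewrite T'_eq Et /= !tnth_mktuple hvG eqxx.
      rewrite (negbTE a_neq_v) h2. move: huv => q1 q2. clear -q1 q2. lia.
    set H := G :\ v.
    have hH : #|G| = #|H|.+1 by rewrite (cardsD1 v G) hvG.
    have hH2 : (2 <= #|H|)%N by move: hG2 h3; rewrite hH => q1 q2; clear -q1 q2; lia.
    have hvH : v \notin H by rewrite !inE eqxx.
    have hHr : forall x, x \in H -> (1 <= x < r)%N.
      move=> x; rewrite !inE => /andP [hxv hxG]. apply/hlink.
      rewrite /link inE hav /= in_set1 (neqC hxv) andbT.
      apply: (mnf_sub hG). rewrite properEcard cards2 (neqC hxv). apply/andP; split.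
        by apply/subsetP => y; rewrite in_set2 => /orP [] /eqP ->.
      move: hG2 h3 => q1 q2. clear -q1 q2. lia.
    have [c0 hcH hca] := find_c hHr hH2.
    have hL := L1 hvH hcH hca hH2.
    have : lt (mset G) t.
      rewrite (mset_D1 hvG) Et hH /=.
      have -> : madd (pv #|H|) (mvar a) = madd (mvar v) (Tk #|H|).
        rewrite /Tk mvar_pv maddA pvD. congr madd. congr pv. move: hH2 => q1. clear -q1. lia.
      exact: lt_addl.
    by move=> hl2; case: (lt_asym hmo hl2 hltG).
  have hkey : lt (key G) (key F).
    have hd2 := d2. have hFn := card_le_n F.
    have h1 := lt_addr hmo (pv n) (lt_addr hmo t (hB u hLM.1)).
    rewrite EuT in h1.
    apply: (@lt_cancel _ _ hmo _ _ (madd (mvar a) (pv (d + #|G|)))).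
    have <- : madd (madd T' (mset G)) (pv n) = madd (key G) (madd (mvar a) (pv (d + #|G|))).
      rewrite T'_eq /key. apply: eq_from_tnth => i; rewrite !tnth_mktuple.
      move: hGn hFn hd2 hG2. rewrite -/d => q1 q2 q3 q4.
      case: (eqVneq i v) => [->|hiv].
        rewrite ?(negbTE hvG) ?(negbTE a_neq_v) ?eqxx. clear -q1 q2 q3 q4. lia.
      rewrite ?(negbTE hiv) ?(neqC hiv). clear -q1 q2 q3 q4. lia.
    have <- : madd (madd B t) (pv n) = madd (key F) (madd (mvar a) (pv (d + #|G|))).
      rewrite Et /B /key. apply: eq_from_tnth => i; rewrite !tnth_mktuple.
      move: hGn hFn hd2 hG2. rewrite -/d => q1 q2 q3 q4.
      case: (eqVneq i v) => [->|hiv].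
        rewrite ?(negbTE hvF) ?(negbTE a_neq_v) ?eqxx. clear -q1 q2 q3 q4. lia.
      rewrite ?(negbTE hiv) ?(neqC hiv). clear -q1 q2 q3 q4. lia.
    exact: h1.
  apply: (IH hkey hG hvG). by rewrite (Tgt_eq hG) /Tk -Et.
have hdeg' : forall m, in_supp p' m -> mtdeg m = d.+1.
  move=> m hm. case: (hsupp m hm) => [hpm | [hdw hfm]]; first exact: hdeg.
  rewrite -(hmw m hdw) mtdegD (f_deg hG hfm) -mtdeg_mset -mtdegD huw.
  exact: hdeg hLM.1.
case: hmo => hirr htr htot _ _.
have [u' hLM'] := lead_exists htr htot hT'p'.
apply: (IHu u' _ p' hLM'); first exact: hlt hLM'.1.
split => //.
- apply: I_sub => //. apply: I_mul. apply: I_mul. exact: f_I.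
- move=> m hm. exact: (lt_trans hmo (hlt m hm) (hB u hLM.1)).
- move=> m hm hmv. case: (hsupp m hm) => [hpm | [hdw hfm]]; first exact: hstd.
  case: (eqVneq (msub m w) (mset G)) => [E|ne].
    have Emu : m = u by rewrite -(hmw m hdw) E huw.
    by move: hm; rewrite /in_supp Emu hu0 eqxx.
  apply: (std_of_tail (hdeg' m hm) hmv _ hG hfm).
  + apply/mdvdP => i. by rewrite tnth_mktuple leq_subr.
  + exact/eqP.
Qed.

Hypothesis hTl : in_supp (f F) (Tk d).

Lemma base : False.
Proof.
have hd2 := d2.
set G0 := [set v; b].
have hvb : v != b by rewrite eq_sym.
have hG0c : #|G0| = 2%N by rewrite /G0 cards2 hvb.
set p0 := mmono K (mvar v) * f F - mmono K (mset (F :\ b)) * f G0.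
have hcoef0 : forall m, mcoef p0 m =
   (if mdvd (mvar v) m then mcoef (f F) (msub m (mvar v)) else 0) -
   (if mdvd (mset (F :\ b)) m then mcoef (f G0) (msub m (mset (F :\ b))) else 0).
  by move=> m; rewrite mcoefB !mcoef_mul.
have hBeq : madd (mset (F :\ b)) (mset G0) = B.
  apply: eq_from_tnth => i; rewrite !tnth_mktuple in_setD1 in_set2.
  case: (eqVneq i v) => [->|hiv]; first by rewrite ?(negbTE hvF) ?eqxx ?(negbTE hvb).
  rewrite ?(negbTE hiv) ?(neqC hiv) /=.
  case: (eqVneq i b) => [->|hib]; first by rewrite hbF.
  by rewrite ?(negbTE hib) /= addn0.
have hB0 : mcoef p0 B = 0.
  rewrite hcoef0 mdvd_add {1}/B add_msub (f_one hF).
  rewrite -{1 2}hBeq mdvd_add add_msub (f_one hG0). by rewrite subrr.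
have hsupp0 : forall m, in_supp p0 m ->
    (mdvd (mvar v) m /\ in_supp (f F) (msub m (mvar v))) \/
    (mdvd (mset (F :\ b)) m /\ in_supp (f G0) (msub m (mset (F :\ b)))).
  move=> m; rewrite /in_supp hcoef0.
  case: (boolP (mdvd (mvar v) m && (mcoef (f F) (msub m (mvar v)) != 0))) => [/andP [h1 h2] _|h1].
    by left.
  have -> : (if mdvd (mvar v) m then mcoef (f F) (msub m (mvar v)) else 0) = 0.
    by move: h1; case: (mdvd _ _) => //= /negPn /eqP.
  rewrite sub0r oppr_eq0. case: (mdvd _ _) => [h2|]; last by rewrite eqxx.
  by right.
have hmsubv : forall m, mdvd (mvar v) m -> madd (mvar v) (msub m (mvar v)) = m.
  by move=> m; apply: msub_add.
have hmsubF : forall m, mdvd (mset (F :\ b)) m -> madd (mset (F :\ b)) (msub m (mset (F :\ b))) = m.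
  by move=> m; apply: msub_add.
have hFb : #|F| = (#|F :\ b|).+1 by rewrite (cardsD1 b F) hbF.
have hT'0 : in_supp p0 T'.
  rewrite /in_supp hcoef0 {1}/T' mdvd_add add_msub.
  have [c hc] : exists c, c \in F :\ b.
    apply/card_gt0P. move: hd2; rewrite /d hFb => q; clear -q; lia.
  have hnd : ~~ mdvd (mset (F :\ b)) T'.
    apply/negP => /mdvdP /(_ c). rewrite T'_eq !tnth_mktuple hc.
    move: hc; rewrite in_setD1 => /andP [_ hcF].
    have hcv : c != v by apply/eqP => E; move: hvF; rewrite -E hcF.
    have hca : a != c by apply/eqP => E; move: haF; rewrite E hcF.
    by rewrite (negbTE hcv) (negbTE hca).
  by rewrite (negbTE hnd) subr0.
have hle : forall m, in_supp p0 m -> le lt m B.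
  move=> m hm. case: (hsupp0 m hm) => [[hdw ht] | [hdw ht]].
    rewrite -(hmsubv m hdw) /B. case: (f_lead hF ht) => [->|hl]; [left|right] => //. exact: lt_addl.
  rewrite -(hmsubF m hdw) -hBeq. case: (f_lead hG0 ht) => [->|hl]; [left|right] => //. exact: lt_addl.
have hdeg0 : forall m, in_supp p0 m -> mtdeg m = d.+1.
  move=> m hm. case: (hsupp0 m hm) => [[hdw ht] | [hdw ht]].
    by rewrite -(hmsubv m hdw) mtdegD mtdeg_mvar (f_deg hF ht).
  rewrite -(hmsubF m hdw) mtdegD mtdeg_mset (f_deg hG0 ht) hG0c /d hFb. by rewrite addn2.
have hBv : tnth B v = 1%N by rewrite /B !tnth_mktuple eqxx (negbTE hvF).
have hclass : Class p0.
  split => //.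
  - apply: I_sub; apply: I_mul; exact: f_I.
  - move=> m hm. case: (hle m hm) => // E. by move: hm; rewrite /in_supp E hB0 eqxx.
  - move=> m hm hmv. case: (hsupp0 m hm) => [[hdw ht] | [hdw ht]].
      case: (eqVneq (msub m (mvar v)) (mset F)) => [E|ne].
        have EmB : m = B by rewrite -(hmsubv m hdw) E.
        by move: hmv hd2; rewrite EmB hBv => q1 q2; clear -q1 q2; lia.
      apply: (std_of_tail (hdeg0 m hm) hmv _ hF ht); last exact/eqP.
      apply/mdvdP => i. by rewrite tnth_mktuple leq_subr.
    case: (eqVneq (msub m (mset (F :\ b))) (mset G0)) => [E|ne].
      have EmB : m = B by rewrite -(hmsubF m hdw) E hBeq.
      by move: hmv hd2; rewrite EmB hBv => q1 q2; clear -q1 q2; lia.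
    apply: (std_of_tail (hdeg0 m hm) hmv _ hG0 ht); last exact/eqP.
    apply/mdvdP => i. by rewrite tnth_mktuple leq_subr.
case: hmo => _ htr htot _ _.
have [u0 hLM0] := lead_exists htr htot hT'0.
exact: inner hLM0 hclass.
Qed.

End Step.

Lemma step F : (forall G, lt (key G) (key F) -> PF G) -> PF F.
Proof.
move=> IH hF hvF Hl.
have hd2 := mnf_card hF.
rewrite (Tgt_eq hF) in Hl.
have hTF : lt (Tk #|F|) (mset F).
  case: (f_lead hF Hl) => // E. exfalso.
  have := congr1 (fun m => tnth m v) E. rewrite /Tk !tnth_mktuple eqxx (negbTE hvF) (negbTE a_neq_v).
  move: hd2 => q; clear -q. lia.
have haF : a \notin F.
  apply/negP => haF. have := L1 hvF haF (le_refl lt (mvar a)) hd2.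
  by move=> h; case: (lt_asym hmo h hTF).
have [b hbF hb] : exists2 b, b \in F & ~~ (1 <= b < r)%N.
  case: (boolP [exists x in F, ~~ (1 <= x < r)%N]) => [/existsP [x /andP [hxF hxr]] | hn].
    by exists x.
  exfalso.
  have hall : forall x, x \in F -> (1 <= x < r)%N.
    move=> x hx. move: hn; rewrite negb_exists => /forallP /(_ x). by rewrite hx /= negbK.
  have [c hc hca] := find_c hall hd2.
  have := L1 hvF hc hca hd2. by move=> h; case: (lt_asym hmo h hTF).
have hbv : b != v by apply/eqP => E; move: hvF; rewrite -E hbF.
have hG0D : [set v; b] \notin D.
  apply/negP => hD.
  have : [set b] \in link D v by rewrite /link inE hav hD in_set1 (neqC hbv).
  move/hlink. by rewrite (negbTE hb).
have hG0 : min_nonface D [set v; b] by apply: pair_mnf => //; rewrite eq_sym.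
exact: (base hF hvF haF hbF hbv hG0 IH Hl).
Qed.

Lemma allPF F : PF F.
Proof.
suff H : forall k F, key F = k -> PF F by exact: H _ F erefl.
elim/(well_founded_ind hwf) => k IHk G hk. apply: step => G' hG'.
apply: (IHk (key G')) => //. by rewrite -hk.
Qed.

End Main.

End Aux.
Import Aux.

(* Vertex k of the paper (k in [n]) is the ordinal k-1 : 'I_n; variable x_k is
   mvar (k-1). In particular vertex 1 is v1 = Ordinal n0. *)
Theorem lemma4p7 (K : fieldType) (n : nat) (n0 : (0 < n)%N)
  (D : {set {set 'I_n}}) (r : nat) (lt : rel (mon n))
  (I : mpoly K n -> Prop) (f : {set 'I_n} -> mpoly K n) (dF : {set 'I_n} -> nat) :
  let v1 : 'I_n := Ordinal n0 in
  simplicial_complex D -> one_dimensional D -> all_vertices D ->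
  (r <= n)%N ->
  (* link_D 1 = {2,...,r} as a set of vertices *)
  (forall v : 'I_n, [set v] \in link D v1 <-> (1 <= v < r)%N) ->
  monomial_order lt ->
  (* x_1 > x_i for all i > 1 *)
  (forall i : 'I_n, i != v1 -> lt (mvar i) (mvar v1)) ->
  (* x_2 > x_3 > ... > x_r *)
  (forall i j : 'I_n, (1 <= i)%N -> (i < j)%N -> (j < r)%N -> lt (mvar j) (mvar i)) ->
  homogeneous_ideal I ->
  (* in_tau(I) = I_Delta *)
  (forall p, init_ideal lt I p <-> @SR_ideal K n D p) ->
  (* {f_F : F minimal non-face} is a reduced homogeneous Groebner basis of I,
     with in_tau(f_F) = x_F and deg f_F = d_F *)
  (forall F, min_nonface D F ->
     [/\ I (f F), homogeneous (dF F) (f F), lead_mon lt (f F) (mset F),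
         mcoef (f F) (mset F) = 1
       & forall m, in_supp (f F) m -> m != mset F -> ~ init_ideal lt I (mmono K m)]) ->
  (forall p, init_ideal lt I p <->
     mono_ideal (fun m => exists2 F, min_nonface D F & m = mset F) p) ->
  forall (a : 'I_n) (F : {set 'I_n}),
    (1 < a.+1 <= minn r 3)%N -> min_nonface D F -> v1 \notin F ->
    ~ in_supp (f F) [tuple ((j == v1) * (dF F).-1 + (j == a))%N | j < n].
Proof.
move=> v1 hSC h1d hav hrn hlink hmo hx1 hch hI hinit hGB hinit2 a F ha hF hvF.
have hId : is_ideal I by case: hI.
exact: (allPF hSC hav hlink hmo hx1 hch hId hGB hinit2 ha hF hvF).
Qed.
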